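(* Let $\mathcal{G}=(G;T_1,T_2;\theta)$ and $\mathcal{G}'=(G';T_1',T_2';\theta')$ be symmetric $2$-tree decompositions such that $\mathcal{G}'$ is obtained from $\mathcal{G}$ by a symmetric $2$-tree $0$-extension. If $\mathcal{G}$ has a $\mathcal{C}_s$-realisation $(p,\tau)$ in the plane, then $\mathcal{G}'$ has a $\mathcal{C}_s$-realisation $(p',\tau)$ in the plane with $p'(w)=p(w)$ for all $w\in V(G)$.
   Context: A multi-graph is finite and loop-free, possibly with parallel edges. A $2$-tree decomposition is $(G;T_1,T_2)$ with $G$ a multi-graph and $T_1,T_2$ spanning trees of $G$ whose edge sets partition $E(G)$. Let $\mathbb{Z}_2=\langle s\rangle$. A $\mathbb{Z}_2$-symmetric multi-graph is $(G,\theta)$ with $\theta:\mathbb{Z}_2\to\mathrm{Aut}(G)$ a non-trivial homomorphism; $s_\theta=\theta(s)$, $s_\theta(v_1v_2)=s_\theta(v_1)s_\theta(v_2)$. A symmetric $2$-tree decomposition is $(G;T_1,T_2;\theta)$ with $(G;T_1,T_2)$ a $2$-tree decomposition, $(G,\theta)$ $\mathbb{Z}_2$-symmetric and $s_\theta(T_i)=T_i$. A symmetric $2$-tree $0$-extension produces $(G';T_1',T_2';\theta')$ from $(G;T_1,T_2;\theta)$ by adding two new distinct vertices $v,s_{\theta'}(v)$ with $s_{\theta'}|_{V(G)}=s_\theta$, adding an edge $vv_1$ to $T_1$ and an edge $vv_2$ to $T_2$ for some (not necessarily distinct) $v_1,v_2\in V(G)$, and adding their images $s_{\theta'}(vv_1)$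 to $T_1$ and $s_{\theta'}(vv_2)$ to $T_2$. Realisations: a framework $(G,p)$ in $\mathbb{R}^d$ is a multi-graph $G$ with an injective $p:V(G)\to\mathbb{R}^d$; $\|x\|_\infty=\max_i|x\cdot e_i|$. If $u,w$ are joined by exactly $t\ge1$ edges, $\{p(u),p(w)\}$ is well-positioned if there are exactly $t$ distinct indices $k$ with $\|p(u)-p(w)\|_\infty=|(p(u)-p(w))\cdot e_k|$ (its framework colours); $(G,p)$ is well-positioned if all adjacent pairs are; a framework colouring $\kappa_p$ assigns to the $t$ edges between $u,w$ these $t$ colours bijectively. A realisation of $(G;T_1,\dots,T_d)$ is a well-positioned $(G,p)$ in $\mathbb{R}^d$ with $\kappa_p^{-1}(i)=E(T_i)$ for all $i$, for some framework colouring. A $\mathcal{C}_s$-realisation of a symmetric $2$-tree decomposition $(G;T_1,T_2;\theta)$ is a pair $(p,\tau)$ where $p:V(G)\to\mathbb{R}^2$ is injective, $\tau:\mathbb{Z}_2\to GL(\mathbb{R}^2)$ is a representation with $\tau(s)$ a reflection in a coordinate axis, $\tau(s)(p(v))=p(s_\theta(v))$ for all $v$, and $(G,p)$ is a realisation of $(G;T_1,T_2)$. *)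

(* Defs.v *)
From mathcomp Require Import all_boot.
From Stdlib Require Import Reals.

Set Implicit Arguments.
Unset Strict Implicit.
Unset Printing Implicit Defensive.

(* A multigraph: finite vertex type V, finite edge type E, and an endpoint
   map [ends : E -> V * V] (the order of the pair is irrelevant: edges are
   undirected; see [joins]). *)

Section Graphs.
Variables (V E : finType) (ends : E -> V * V).

Definition loopless : Prop := forall e, (ends e).1 != (ends e).2.

Definition joins (e : E) (x y : V) : bool :=
  (ends e == (x, y)) || (ends e == (y, x)).

Definition between (x y : V) : {set E} := [set e | joins e x y].

Fixpoint walk (T : {set E}) (x : V) (s : seq E) (y : V) : bool :=
  match s with
  | [::] => x == y
  | e :: s' =>
      (e \in T) &&
      (((ends e).1 == x) && walk T (ends e).2 s' y
       || ((ends e).2 == x) && walk T (ends e).1 s' y)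
  end.

Definition connected_sub (T : {set E}) : Prop :=
  forall x y : V, exists s, walk T x s y.

(* acyclic: no nonempty closed walk with pairwise distinct edges
   (closed trail); in a multigraph two parallel edges form a cycle. *)
Definition acyclic_sub (T : {set E}) : Prop :=
  forall (x : V) (s : seq E), walk T x s x -> uniq s -> s = [::].

Definition spanning_tree (T : {set E}) : Prop :=
  connected_sub T /\ acyclic_sub T.

Definition two_tree_dec (T1 T2 : {set E}) : Prop :=
  loopless /\ T1 :&: T2 = set0 /\ T1 :|: T2 = setT /\
  spanning_tree T1 /\ spanning_tree T2.

Definition is_aut (sV : V -> V) (sE : E -> E) : Prop :=
  bijective sV /\ bijective sE /\
  forall e, joins (sE e) (sV (ends e).1) (sV (ends e).2).

(* Z2-symmetric multigraph (G, theta): theta(s) = (sV, sE) is an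
   automorphism with theta(s)^2 = id, and theta is non-trivial. *)
Definition Z2_symmetric (sV : V -> V) (sE : E -> E) : Prop :=
  is_aut sV sE /\ (forall x, sV (sV x) = x) /\ (forall e, sE (sE e) = e) /\
  ~ ((forall x, sV x = x) /\ (forall e, sE e = e)).

Definition sym_two_tree_dec (T1 T2 : {set E}) (sV : V -> V) (sE : E -> E)
  : Prop :=
  two_tree_dec T1 T2 /\ Z2_symmetric sV sE /\
  sE @: T1 = T1 /\ sE @: T2 = T2.

End Graphs.

(* (G';T1',T2';theta') is obtained from (G;T1,T2;theta) by a symmetric
   2-tree 0-extension, where G is identified with a subgraph of G' via the
   injections iV : V -> V', iE : E -> E' (preserving incidence). *)
Definition zero_ext (V E V' E' : finType)
  (ends : E -> V * V) (T1 T2 : {set E}) (sV : V -> V)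
  (ends' : E' -> V' * V') (T1' T2' : {set E'}) (sV' : V' -> V') (sE' : E' -> E')
  (iV : V -> V') (iE : E -> E') : Prop :=
  injective iV /\ injective iE /\
  (forall e, joins ends' (iE e) (iV (ends e).1) (iV (ends e).2)) /\
  (forall x, sV' (iV x) = iV (sV x)) /\
  exists (v : V') (v1 v2 : V) (a1 a2 : E'),
    v \notin codom iV /\ sV' v \notin codom iV /\ v != sV' v /\
    (forall x : V', [|| x \in codom iV, x == v | x == sV' v]) /\
    uniq [:: a1; a2; sE' a1; sE' a2] /\
    all (fun a => a \notin codom iE) [:: a1; a2; sE' a1; sE' a2] /\
    (forall f : E', (f \in codom iE) || (f \in [:: a1; a2; sE' a1; sE' a2])) /\
    joins ends' a1 v (iV v1) /\ joins ends' a2 v (iV v2) /\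
    T1' = iE @: T1 :|: [set a1; sE' a1] /\
    T2' = iE @: T2 :|: [set a2; sE' a2].

Definition point := (R * R)%type.

Definition coord (x : point) (k : 'I_2) : R :=
  if val k == 0%N then x.1 else x.2.

Definition infdist (x y : point) : R :=
  Rmax (Rabs (Rminus x.1 y.1)) (Rabs (Rminus x.2 y.2)).

Definition Reqb (a b : R) : bool := if Req_EM_T a b then true else false.

Section Realisations.
Variables (V E : finType) (ends : E -> V * V).

Definition fcols (p : V -> point) (x y : V) : {set 'I_2} :=
  [set k | Reqb (Rabs (Rminus (coord (p x) k) (coord (p y) k)))
                (infdist (p x) (p y))].

Definition well_positioned (p : V -> point) : Prop :=
  forall x y : V, between ends x y != set0 ->
    #|fcols p x y| = #|between ends x y|.

Definition framework_colouring (p : V -> point) (kappa : E -> 'I_2) : Prop :=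
  forall x y : V, between ends x y != set0 ->
    {in between ends x y &, injective kappa} /\
    kappa @: between ends x y = fcols p x y.

Definition realisation (T1 T2 : {set E}) (p : V -> point) : Prop :=
  injective p /\ well_positioned p /\
  exists kappa : E -> 'I_2, framework_colouring p kappa /\
    [set e | kappa e == ord0] = T1 /\ [set e | kappa e == ord_max] = T2.

Definition refl (k : 'I_2) (x : point) : point :=
  if val k == 0%N then (Ropp x.1, x.2) else (x.1, Ropp x.2).

(* C_s-realisation (p, tau) of (G;T1,T2;theta); tau is determined by
   tau_s = tau(s), which must be a reflection in a coordinate axis. *)
Definition Cs_realisation (T1 T2 : {set E}) (sV : V -> V)
  (p : V -> point) (tau_s : point -> point) : Prop :=
  (exists k : 'I_2, forall x, tau_s x = refl k x) /\
  injective p /\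
  (forall v, tau_s (p v) = p (sV v)) /\
  realisation T1 T2 p.

End Realisations.

(* Main.v *)
Require Import Defs.
From mathcomp Require Import all_boot.
From Stdlib Require Import Reals.
From Stdlib Require Import Lra List.
Set Implicit Arguments.
Unset Strict Implicit.

Definition fc (P Q : point) : {set 'I_2} :=
  [set k | Reqb (Rabs (Rminus (coord P k) (coord Q k))) (infdist P Q)].

Lemma I2_cases (k : 'I_2) : k = ord0 \/ k = ord_max.
Proof.
case: k => [[|[|m]] Hm]; [left|right|by []]; exact/val_inj.
Qed.

Lemma fc_x P Q : (Rabs (P.1 - Q.1) > Rabs (P.2 - Q.2))%R -> fc P Q = [set ord0].
Proof.
move=> H; apply/setP => k; rewrite !inE /Reqb /infdist.
rewrite Rmax_left; last lra.
case: (I2_cases k) => ->; rewrite /coord /=;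
  destruct (Req_EM_T _ _); by [|lra].
Qed.

Lemma fc_y P Q : (Rabs (P.2 - Q.2) > Rabs (P.1 - Q.1))%R -> fc P Q = [set ord_max].
Proof.
move=> H; apply/setP => k; rewrite !inE /Reqb /infdist.
rewrite Rmax_right; last lra.
case: (I2_cases k) => ->; rewrite /coord /=;
  destruct (Req_EM_T _ _); by [|lra].
Qed.

Lemma fc_eq P Q : Rabs (P.1 - Q.1) = Rabs (P.2 - Q.2) -> fc P Q = setT.
Proof.
move=> H; apply/setP => k; rewrite !inE /Reqb /infdist.
rewrite Rmax_left; last lra.
case: (I2_cases k) => ->; rewrite /coord /=;
  destruct (Req_EM_T _ _); by [|lra].
Qed.

Lemma fc_sym P Q : fc P Q = fc Q P.
Proof.
apply/setP => k; rewrite !inE /infdist.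
by rewrite (Rabs_minus_sym (coord P k)) (Rabs_minus_sym P.1) (Rabs_minus_sym P.2).
Qed.

Lemma refl_coord k P j : Rabs (coord (refl k P) j) = Rabs (coord P j).
Proof.
rewrite /refl /coord; case: (val k == 0%N); case: (val j == 0%N) => //=;
  by rewrite Rabs_Ropp.
Qed.

Lemma fc_refl k P Q : fc (refl k P) (refl k Q) = fc P Q.
Proof.
have E j : Rabs (coord (refl k P) j - coord (refl k Q) j) = Rabs (coord P j - coord Q j).
  rewrite /refl /coord; case: (val k == 0%N); case: (val j == 0%N) => //=;
  by rewrite -Rabs_Ropp; f_equal; ring.
apply/setP => j; rewrite !inE E /infdist.
have := E ord0; have := E ord_max; rewrite /coord /= => -> -> //.
Qed.

Lemma refl_invol k P : refl k (refl k P) = P.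
Proof. rewrite /refl; case: (val k == 0%N); case: P => a b /=; by rewrite Ropp_involutive. Qed.

Lemma avoid (L : list R) lo hi : (lo < hi)%R ->
  exists t, (lo < t < hi)%R /\ forall x, In x L -> t <> x.
Proof.
elim: L lo hi => [|x L IH] lo hi H.
  exists ((lo + hi) / 2)%R; split; [lra|by []].
destruct (Rle_dec x ((lo + hi)/2)) as [Hx|Hx].
  have [t [Ht HL]] := IH ((lo+hi)/2)%R hi ltac:(lra).
  exists t; split; first lra.
  move=> y [<-|Hy]; [lra|exact: HL].
have [t [Ht HL]] := IH lo ((lo+hi)/2)%R ltac:(lra).
exists t; split; first lra.
move=> y [<-|Hy]; [lra|exact: HL].
Qed.

Lemma in_In (T : eqType) (x : T) s : x \in s -> In x s.
Proof.
elim: s => //= y s IH; rewrite seq.in_cons => /orP [/eqP ->|H]; [by left|right; exact: IH].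
Qed.

Lemma family_avoid (V : finType) (p : V -> point) a b g d h (G : point -> Prop) :
  g <> 0%R -> d <> 0%R -> (0 < h)%R ->
  (forall t, (0 < t < h)%R -> G ((a + g * t)%R, (b + d * t)%R)) ->
  exists q : point, q.1 <> 0%R /\ q.2 <> 0%R /\ (forall w, q <> p w) /\ G q.
Proof.
move=> Hg Hd Hh HG.
have [t [Ht HL]] := @avoid ((- a / g)%R :: (- b / d)%R ::
   map (fun w => (((p w).1 - a) / g)%R) (enum V)) 0%R h Hh.
exists ((a + g * t)%R, (b + d * t)%R); split; last split; last split.
- move=> /= E; apply: (HL (- a / g)%R); first by left.
  field_simplify_eq; lra.
- move=> /= E; apply: (HL (- b / d)%R); first by right; left.
  field_simplify_eq; lra.
- move=> w E; apply: (HL (((p w).1 - a) / g)%R).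
    right; right; apply: in_map; apply: in_In; by rewrite mem_enum.
  rewrite -E /=; field_simplify_eq; lra.
- exact: HG.
Qed.

Lemma exists_q (V : finType) (p : V -> point) (P1 P2 : point) (same : bool) :
  (~~ same -> P1 <> P2) ->
  exists q : point, q.1 <> 0%R /\ q.2 <> 0%R /\ (forall w, q <> p w) /\
   (if same then fc q P1 = setT else fc q P1 = [set ord0] /\ fc q P2 = [set ord_max]).
Proof.
case: P1 => a b; case: P2 => c d.
case: same => [_|/(_ isT) Hne] /=.
  apply: (@family_avoid V p a b 1%R 1%R 1%R (fun q => fc q (a,b) = setT)); [lra|lra|lra|] => t Ht.
  apply: fc_eq => /=; f_equal; ring.
destruct (Req_EM_T a c) as [Eac|Eac].
  subst c.
  have Hbd : b <> d by move=> E; apply: Hne; rewrite E.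
  have Hp : (0 < Rabs (b - d))%R by apply: Rabs_pos_lt; lra.
  apply: (@family_avoid V p a b 1%R (1/2)%R (Rabs (b - d) / 2)%R (fun q => fc q (a,b) = [set ord0] /\ fc q (a,d) = [set ord_max])); [lra|lra|lra|] => t Ht.
  split; [apply: fc_x | apply: fc_y] => /=; move: Ht;
    unfold Rabs; repeat destruct Rcase_abs; lra.
destruct (Req_EM_T b d) as [Ebd|Ebd].
  subst d.
  have Hp : (0 < Rabs (c - a))%R by apply: Rabs_pos_lt; lra.
  apply: (@family_avoid V p c b (1/2)%R 1%R (Rabs (c - a) / 2)%R (fun q => fc q (a,b) = [set ord0] /\ fc q (c,b) = [set ord_max])); [lra|lra|lra|] => t Ht.
  split; [apply: fc_x | apply: fc_y] => /=; move: Ht;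
    unfold Rabs; repeat destruct Rcase_abs; lra.
have Hp : (0 < Rabs (c - a))%R by apply: Rabs_pos_lt; lra.
have Hp' : (0 < Rabs (b - d))%R by apply: Rabs_pos_lt; lra.
apply: (@family_avoid V p c b (1/2)%R 1%R (Rmin (Rabs (c - a)) (Rabs (b - d)) / 2)%R (fun q => fc q (a,b) = [set ord0] /\ fc q (c,d) = [set ord_max]));
  [lra|lra|have := Rmin_glb_lt _ _ _ Hp Hp'; lra|] => t Ht.
have H1 := Rmin_l (Rabs (c - a)) (Rabs (b - d)).
have H2 := Rmin_r (Rabs (c - a)) (Rabs (b - d)).
split; [apply: fc_x | apply: fc_y] => /=; move: Ht H1 H2;
  unfold Rabs; repeat destruct Rcase_abs; lra.
Qed.
Lemma new_vertex_good (E : finType) (kap : E -> 'I_2) (B : {set E}) e1 e2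
  (c1 c2 : bool) (F : {set 'I_2}) :
 (forall f, (f \in B) = (c1 && (f == e1)) || (c2 && (f == e2))) ->
 e1 != e2 -> kap e1 = ord0 -> kap e2 = ord_max ->
 (c1 -> c2 -> F = setT) -> (c1 -> ~~ c2 -> F = [set ord0]) ->
 (~~ c1 -> c2 -> F = [set ord_max]) ->
 B != set0 -> {in B &, injective kap} /\ kap @: B = F.
Proof.
move=> HB ne k1 k2 F11 F10 F01 Hne.
split.
  move=> f g; rewrite !HB => /orP [] /andP [_ /eqP ->] /orP [] /andP [_ /eqP ->] //;
   rewrite k1 k2 => /(congr1 val) //.
move: F11 F10 F01 HB Hne; case: c1; case: c2 => F11 F10 F01 HB Hne.
- have ->: B = [set e1; e2] by apply/setP => f; rewrite HB !inE.
  rewrite imsetU1 imset_set1 k1 k2 F11 //; apply/setP => j; rewrite !inE.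
  by case: (I2_cases j) => ->; rewrite eqxx ?orbT.
- have ->: B = [set e1] by apply/setP => f; rewrite HB !inE orbF.
  by rewrite imset_set1 k1 F10.
- have ->: B = [set e2] by apply/setP => f; rewrite HB !inE.
  by rewrite imset_set1 k2 F01.
- exfalso; case/set0Pn: Hne => f; by rewrite HB.
Qed.

Section J.
Variables (V E : finType) (ends : E -> V * V).

Lemma joins_sym e x y : joins ends e x y = joins ends e y x.
Proof. by rewrite /joins orbC. Qed.

Lemma between_sym x y : between ends x y = between ends y x.
Proof. by apply/setP => e; rewrite !inE joins_sym. Qed.

Lemma joins_iff f u1 u2 x y : joins ends f u1 u2 ->
  joins ends f x y = ((x == u1) && (y == u2)) || ((x == u2) && (y == u1)).
Proof.
rewrite /joins => /orP [] /eqP ->; rewrite !xpair_eqE.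
all: rewrite ?(eq_sym u1) ?(eq_sym u2);
  by case: (x == u1); case: (y == u2); case: (x == u2); case: (y == u1).


Qed.

Lemma joins_self e : joins ends e (ends e).1 (ends e).2.
Proof. by rewrite /joins; case: (ends e) => a b; rewrite eqxx. Qed.

Lemma joins_aut (s : E -> E) (g : V -> V) f x y : joins ends f x y ->
  (forall e, joins ends (s e) (g (ends e).1) (g (ends e).2)) ->
  joins ends (s f) (g x) (g y).
Proof.
move=> H Ha; have := Ha f; move: H; rewrite /joins => /orP [] /eqP -> //=.
by rewrite orbC.
Qed.
End J.

Lemma pick_inj (A B : finType) (g : A -> B) y : injective g ->
  [pick a | g a == g y] = Some y.
Proof.
move=> gi; case: pickP => [a /eqP H|H]; first by rewrite (gi _ _ H).
by move: (H y); rewrite eqxx.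
Qed.

Lemma pick_none (A B : finType) (g : A -> B) x : x \notin codom g ->
  [pick a | g a == x] = None.
Proof.
move=> nx; case: pickP => // a /eqP H; by rewrite -H codom_f in nx.
Qed.

Lemma notcod (A B : finType) (g : A -> B) x w : x \notin codom g -> (x == g w) = false.
Proof. by move=> nx; apply/eqP => E; rewrite E codom_f in nx. Qed.

Lemma notcod' (A B : finType) (g : A -> B) x w : x \notin codom g -> (g w == x) = false.
Proof. by move=> nx; rewrite eq_sym notcod. Qed.

Lemma notcod_imset (A B : finType) (g : A -> B) x (D : {set A}) : x \notin codom g ->
  (x \in g @: D) = false.
Proof. by move=> nx; apply/imsetP => -[a _ E]; rewrite E codom_f in nx. Qed.
Theorem proposition5p8
  (V E V' E' : finType)
  (ends : E -> V * V) (T1 T2 : {set E}) (sV : V -> V) (sE : E -> E)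
  (ends' : E' -> V' * V') (T1' T2' : {set E'}) (sV' : V' -> V') (sE' : E' -> E')
  (iV : V -> V') (iE : E -> E')
  (HG : sym_two_tree_dec ends T1 T2 sV sE)
  (HG' : sym_two_tree_dec ends' T1' T2' sV' sE')
  (Hext : zero_ext ends T1 T2 sV ends' T1' T2' sV' sE' iV iE)
  (p : V -> point) (tau_s : point -> point)
  (Hp : Cs_realisation ends T1 T2 sV p tau_s) :
  exists p' : V' -> point,
    Cs_realisation ends' T1' T2' sV' p' tau_s /\
    (forall w : V, p' (iV w) = p w).
Proof.
case: Hp => [[k Hk] [pinj [Htau [_ [Hwp [kappa [Hcol [HK1 HK2]]]]]]]].
case: HG' => _ [[[_ [_ Haut]] [sVinv _]] _].
case: HG => _ [[_ [sVold _]] _].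
case: Hext => iVinj [iEinj [HiE [HsV [v [v1 [v2 [a1 [a2 [vnot [svnot [vnsv
  [Vcls [Huniq [Hall [Ecls [Ha1 [Ha2 [HT1 HT2]]]]]]]]]]]]]]]]]].
have [q [q1 [q2 [qp Hq]]]] := @exists_q V p (p v1) (p v2) (v1 == v2)
  (fun H E => elimN eqP H (pinj _ _ E)).
pose r := refl k q.
pose p' := fun x => if [pick w | iV w == x] is Some w then p w
                    else if x == v then q else r.
have p'iV w : p' (iV w) = p w by rewrite /p' pick_inj.
have p'v : p' v = q by rewrite /p' pick_none // eqxx.
have p'sv : p' (sV' v) = r by rewrite /p' pick_none // eq_sym (negbTE vnsv).
have Vcase x : (exists w, x = iV w) \/ x = v \/ x = sV' v.
  case/or3P: (Vcls x) => [/codomP [w ->]|/eqP->|/eqP->];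
   [left; by exists w|right; left|right; right] => //.
have Ecase f : (exists e, f = iE e) \/ f = a1 \/ f = a2 \/ f = sE' a1 \/ f = sE' a2.
  case/orP: (Ecls f) => [/codomP [e ->]|]; first by left; exists e.
  rewrite !inE => /or4P [] /eqP ->; tauto.

have dst (x y : E') : (x = y -> ~~ uniq [:: a1; a2; sE' a1; sE' a2]) -> (x == y) = false.
  by move=> H; apply/eqP => /H; rewrite Huniq.
have D12 : (a1 == a2) = false by apply: dst => ->; rewrite /= !inE eqxx.
have D31 : (sE' a1 == a1) = false by apply: dst => ->; rewrite /= !inE !eqxx /= ?orbT ?andbF.
have D41 : (sE' a2 == a1) = false by apply: dst => ->; rewrite /= !inE !eqxx /= ?orbT ?andbF.
have D32 : (sE' a1 == a2) = false by apply: dst => ->; rewrite /= !inE !eqxx /= ?orbT ?andbF.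
have D42 : (sE' a2 == a2) = false by apply: dst => ->; rewrite /= !inE !eqxx /= ?orbT ?andbF.
have D34 : (sE' a1 == sE' a2) = false by apply: dst => ->; rewrite /= !inE !eqxx /= ?orbT ?andbF.
have D21 : (a2 == a1) = false by rewrite eq_sym.
have D13 : (a1 == sE' a1) = false by rewrite eq_sym.
have D14 : (a1 == sE' a2) = false by rewrite eq_sym.
have D23 : (a2 == sE' a1) = false by rewrite eq_sym.
have D24 : (a2 == sE' a2) = false by rewrite eq_sym.
have D43 : (sE' a2 == sE' a1) = false by rewrite eq_sym.
move: Hall => /= /and5P [na1 na2 nsa1 nsa2 _].
have Hsa1 : joins ends' (sE' a1) (sV' v) (iV (sV v1)) by rewrite -HsV; exact: joins_aut Ha1 Haut.
have Hsa2 : joins ends' (sE' a2) (sV' v) (iV (sV v2)) by rewrite -HsV; exact: joins_aut Ha2 Haut.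
have vsv : (v == sV' v) = false by apply/negbTE.
have svv : (sV' v == v) = false by rewrite eq_sym.

pose kap := fun f => if [pick e | iE e == f] is Some e then kappa e
                     else if (f == a1) || (f == sE' a1) then ord0 else ord_max.
have kiE e : kap (iE e) = kappa e by rewrite /kap pick_inj.
have ka1 : kap a1 = ord0 by rewrite /kap pick_none // eqxx.
have ksa1 : kap (sE' a1) = ord0 by rewrite /kap pick_none // eqxx orbT.
have ka2 : kap a2 = ord_max by rewrite /kap pick_none // D21 D23.
have ksa2 : kap (sE' a2) = ord_max by rewrite /kap pick_none // D41 D43.
have nV := fun x w (H : x \notin codom iV) => notcod w H.
have nE := fun x w (H : x \notin codom iE) => notcod' w H.
have Bold x0 y0 : between ends' (iV x0) (iV y0) = iE @: between ends x0 y0.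
  apply/setP => f; rewrite inE; case: (Ecase f) => [[e ->]|[->|[->|[->|->]]]].
  - by rewrite (joins_iff _ _ (HiE e)) mem_imset // inE (joins_iff _ _ (joins_self _ e)) !(inj_eq iVinj).
  - by rewrite (joins_iff _ _ Ha1) notcod_imset // ?(nV _ _ vnot) ?(notcod' _ vnot) ?andbF.
  - by rewrite (joins_iff _ _ Ha2) notcod_imset // ?(nV _ _ vnot) ?(notcod' _ vnot) ?andbF.
  - by rewrite (joins_iff _ _ Hsa1) notcod_imset // ?(nV _ _ svnot) ?(notcod' _ svnot) ?andbF.
  - by rewrite (joins_iff _ _ Hsa2) notcod_imset // ?(nV _ _ svnot) ?(notcod' _ svnot) ?andbF.
have Bv y0 f : (f \in between ends' v (iV y0)) = ((y0 == v1) && (f == a1)) || ((y0 == v2) && (f == a2)).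
  rewrite inE; case: (Ecase f) => [[e ->]|[->|[->|[->|->]]]].
  - by rewrite (joins_iff _ _ (HiE e)) ?(nV _ _ vnot) ?(nE _ _ na1) ?(nE _ _ na2) ?andbF.
  - by rewrite (joins_iff _ _ Ha1) ?(nV _ _ vnot) !(inj_eq iVinj) !eqxx D12 ?andbF ?orbF ?andbT.
  - by rewrite (joins_iff _ _ Ha2) ?(nV _ _ vnot) !(inj_eq iVinj) !eqxx D21 ?andbF ?orbF ?andbT.
  - by rewrite (joins_iff _ _ Hsa1) ?(nV _ _ vnot) vsv D31 D32 ?andbF.
  - by rewrite (joins_iff _ _ Hsa2) ?(nV _ _ vnot) vsv D41 D42 ?andbF.
have Bsv y0 f : (f \in between ends' (sV' v) (iV y0)) =
    ((y0 == sV v1) && (f == sE' a1)) || ((y0 == sV v2) && (f == sE' a2)).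
  rewrite inE; case: (Ecase f) => [[e ->]|[->|[->|[->|->]]]].
  - by rewrite (joins_iff _ _ (HiE e)) ?(nV _ _ svnot) ?(nE _ _ nsa1) ?(nE _ _ nsa2) ?andbF.
  - by rewrite (joins_iff _ _ Ha1) ?(nV _ _ svnot) svv D13 D14 ?andbF.
  - by rewrite (joins_iff _ _ Ha2) ?(nV _ _ svnot) svv D23 D24 ?andbF.
  - by rewrite (joins_iff _ _ Hsa1) ?(nV _ _ svnot) !(inj_eq iVinj) !eqxx D34 ?andbF ?orbF ?andbT.
  - by rewrite (joins_iff _ _ Hsa2) ?(nV _ _ svnot) !(inj_eq iVinj) !eqxx D43 ?andbF ?orbF ?andbT.
have Bnew x y : x \notin codom iV -> y \notin codom iV -> between ends' x y = set0.
  move=> Hx Hy; apply/setP => f; rewrite !inE; case: (Ecase f) => [[e ->]|[->|[->|[->|->]]]].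
  - by rewrite (joins_iff _ _ (HiE e)) ?(nV _ _ Hx) ?(nV _ _ Hy) ?andbF.
  - by rewrite (joins_iff _ _ Ha1) ?(nV _ _ Hx) ?(nV _ _ Hy) ?andbF.
  - by rewrite (joins_iff _ _ Ha2) ?(nV _ _ Hx) ?(nV _ _ Hy) ?andbF.
  - by rewrite (joins_iff _ _ Hsa1) ?(nV _ _ Hx) ?(nV _ _ Hy) ?andbF.
  - by rewrite (joins_iff _ _ Hsa2) ?(nV _ _ Hx) ?(nV _ _ Hy) ?andbF.

have fcE (x y : V') : fcols p' x y = fc (p' x) (p' y) by [].
have hrefl w : p (sV w) = refl k (p w) by rewrite -Hk Htau.
have sVinj : injective sV by move=> x y Ex; rewrite -(sVold x) Ex sVold.
pose Good x y := between ends' x y != set0 ->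
  {in between ends' x y &, injective kap} /\ kap @: between ends' x y = fcols p' x y.
have Gsym x y : Good x y -> Good y x.
  by rewrite /Good between_sym !fcE fc_sym.
have Gold x0 y0 : Good (iV x0) (iV y0).
  rewrite /Good Bold => Hne.
  have Hne0 : between ends x0 y0 != set0.
    by apply: contraNneq Hne => ->; rewrite imset0.
  have [Hi Him] := Hcol x0 y0 Hne0.
  split.
    move=> f g /imsetP [e1 He1 ->] /imsetP [e2 He2 ->]; rewrite !kiE => Ek.
    by rewrite (Hi _ _ He1 He2 Ek).
  rewrite -imset_comp (eq_imset _ (g := kappa)); last by move=> e /=; rewrite kiE.
  by rewrite Him fcE !p'iV.
have Gv y0 : Good v (iV y0).
  move=> Hne; apply: (new_vertex_good (c1 := y0 == v1) (c2 := y0 == v2) (Bv y0)) => //.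
  - by rewrite D12.
  - rewrite fcE p'v p'iV => /eqP -> /eqP Ex; move: Hq; by rewrite Ex eqxx.
  - rewrite fcE p'v p'iV => /eqP -> H; move: Hq; by rewrite (negbTE H) => -[].
  - rewrite fcE p'v p'iV => H /eqP Ex; subst y0; move: Hq; by rewrite eq_sym (negbTE H) => -[].
have Gsv y0 : Good (sV' v) (iV y0).
  move=> Hne; apply: (new_vertex_good (c1 := y0 == sV v1) (c2 := y0 == sV v2) (Bsv y0)) => //.
  - by rewrite D34.
  - rewrite fcE p'sv p'iV => /eqP -> /eqP Ex; move: Hq; have Ex2 := sVinj _ _ Ex.
    by rewrite hrefl fc_refl Ex2 eqxx.
  - rewrite fcE p'sv p'iV => /eqP -> H; move: Hq.
    rewrite hrefl fc_refl (_ : (v1 == v2) = false) ?fc_refl => [[]|] //.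
    by apply/eqP => Ex; move: H; rewrite Ex eqxx.
  - rewrite fcE p'sv p'iV => H /eqP Ex; subst y0; move: Hq.
    rewrite hrefl fc_refl (_ : (v1 == v2) = false) ?fc_refl => [[]|] //.
    by apply/eqP => Ex; move: H; rewrite Ex eqxx.
have Gall x y : Good x y.
  have Gnew x' y' : x' \notin codom iV -> y' \notin codom iV -> Good x' y'.
    by move=> Hx Hy; rewrite /Good Bnew // eqxx.
  case: (Vcase y) => [[y0 ->]|Hy].
    case: (Vcase x) => [[x0 ->]|[->|->]]; by [apply: Gold|apply: Gv|apply: Gsv].
  have Hy' : y \notin codom iV by case: Hy => ->.
  case: (Vcase x) => [[x0 ->]|Hx]; last by apply: Gnew => //; case: Hx => ->.
  apply: Gsym; case: Hy => ->; by [apply: Gv|apply: Gsv].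
have Hcol' : framework_colouring ends' p' kap by move=> x y; exact: Gall.
have qr : q <> r.
  rewrite /r /refl; case: (_ == _) => Ex.
    by have := f_equal fst Ex => /= H; apply: q1; lra.
  by have := f_equal snd Ex => /= H; apply: q2; lra.
have rp w : r <> p w.
  by move=> Ex; apply: (qp (sV w)); rewrite hrefl -Ex /r refl_invol.
exists p'; split; last exact: p'iV.
have p'inj : injective p'.
  move=> x y; case: (Vcase x) => [[x0 ->]|[->|->]]; case: (Vcase y) => [[y0 ->]|[->|->]];
    rewrite ?p'iV ?p'v ?p'sv // => Ex;
    first [ by rewrite (pinj _ _ Ex) | by case: (qp _ Ex) | by case: (qp _ (esym Ex))
          | by case: (rp _ Ex) | by case: (rp _ (esym Ex)) | by case: (qr Ex)
          | by case: (qr (esym Ex)) ].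
split; first by exists k.
split; first exact: p'inj.
split.
  move=> x; case: (Vcase x) => [[w ->]|[->|->]].
  - by rewrite HsV !p'iV Htau.
  - by rewrite p'v p'sv Hk.
  - by rewrite sVinv p'sv p'v Hk /r refl_invol.
split; first exact: p'inj.
split.
  move=> x y Hne; have [Hi Him] := Hcol' x y Hne.
  by rewrite -Him (card_in_imset Hi).
exists kap; split; first exact: Hcol'.
split.
  apply/setP => f; rewrite inE HT1 !inE; case: (Ecase f) => [[e ->]|[->|[->|[->|->]]]].
  - by rewrite kiE mem_imset // -HK1 inE (nE _ _ na1) (nE _ _ nsa1) !orbF.
  - by rewrite ka1 notcod_imset // !eqxx.
  - by rewrite ka2 notcod_imset // D21 D23.
  - by rewrite ksa1 notcod_imset // !eqxx orbT.
  - by rewrite ksa2 notcod_imset // D41 D43.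
apply/setP => f; rewrite inE HT2 !inE; case: (Ecase f) => [[e ->]|[->|[->|[->|->]]]].
- by rewrite kiE mem_imset // -HK2 inE (nE _ _ na2) (nE _ _ nsa2) !orbF.
- by rewrite ka1 notcod_imset // D12 D14.
- by rewrite ka2 notcod_imset // !eqxx.
- by rewrite ksa1 notcod_imset // D32 D34.
- by rewrite ksa2 notcod_imset // !eqxx orbT.
Qed.
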